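(* Let $G$ be a profinite group satisfying the maximum condition on closed subgroups, and let $H$ be an open normal subgroup of $G$. Then the maps $G'\mapsto \mathrm{i}_H(G'\cap H)$ and $H'\mapsto \mathrm{i}_G(H')$ are well-defined, mutually inverse bijections between the set of isolated orbital closed subgroups of $G$ and the set of isolated orbital closed subgroups of $H$.
   Context: A closed subgroup $K$ of a profinite group $X$ is $X$-orbital if $\mathbf{N}_X(K)$ is open in $X$. An orbital closed subgroup $K$ is $X$-isolated orbital if for every $X$-orbital closed subgroup $K'$ with $K\lneq K'\le X$ we have $[K':K]=\infty$. For an $X$-orbital closed subgroup $K$, its isolator $\mathrm{i}_X(K)$ is the closed subgroup of $X$ generated by all $X$-orbital closed subgroups $L$ with $K\le L$ and $[L:K]<\infty$. *)

(* Defs.v *)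
From Stdlib Require Import List.
Set Implicit Arguments.

Record TopGroup := {
  carrier :> Type;
  mul : carrier -> carrier -> carrier;
  inv : carrier -> carrier;
  one : carrier;
  is_open : (carrier -> Prop) -> Prop;
  mulA : forall x y z, mul x (mul y z) = mul (mul x y) z;
  mul1g : forall x, mul one x = x;
  mulVg : forall x, mul (inv x) x = one;
  open_full : is_open (fun _ => True);
  open_union : forall F : (carrier -> Prop) -> Prop,
      (forall U, F U -> is_open U) -> is_open (fun x => exists U, F U /\ U x);
  open_inter : forall U V, is_open U -> is_open V -> is_open (fun x => U x /\ V x);
  mul_cont : forall W x y, is_open W -> W (mul x y) ->
      exists U V, is_open U /\ is_open V /\ U x /\ V y /\
                  (forall u v, U u -> V v -> W (mul u v));
  inv_cont : forall W, is_open W -> is_open (fun x => W (inv x))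
}.

Section Defs.
Variable G : TopGroup.

Definition subset (A B : G -> Prop) : Prop := forall x, A x -> B x.
Definition seteq (A B : G -> Prop) : Prop := forall x, A x <-> B x.
Definition setI (A B : G -> Prop) : G -> Prop := fun x => A x /\ B x.

Definition is_closed (C : G -> Prop) : Prop := is_open G (fun x => ~ C x).

Definition compact : Prop :=
  forall F : (G -> Prop) -> Prop, (forall U, F U -> is_open G U) ->
    (forall x : G, exists U, F U /\ U x) ->
    exists s : list (G -> Prop), (forall U, In U s -> F U) /\
      (forall x : G, exists U, In U s /\ U x).

Definition hausdorff : Prop :=
  forall x y : G, x <> y -> exists U V, is_open G U /\ is_open G V /\ U x /\ V y /\
    (forall z, ~ (U z /\ V z)).

Definition connected (S : G -> Prop) : Prop :=
  ~ exists U V, is_open G U /\ is_open G V /\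
      (forall x, S x -> U x \/ V x) /\
      (exists x, S x /\ U x) /\ (exists x, S x /\ V x) /\
      (forall x, ~ (S x /\ U x /\ V x)).

Definition totally_disconnected : Prop :=
  forall S, connected S -> forall x y, S x -> S y -> x = y.

Definition profinite : Prop := compact /\ hausdorff /\ totally_disconnected.

Definition is_subgroup (K : G -> Prop) : Prop :=
  K (one G) /\ (forall x y, K x -> K y -> K (mul G x y)) /\ (forall x, K x -> K (inv G x)).

Definition is_normal (H : G -> Prop) : Prop :=
  is_subgroup H /\ forall g h, H h -> H (mul G (mul G g h) (inv G g)).

Definition open_in (X S : G -> Prop) : Prop :=
  subset S X /\ exists U, is_open G U /\ forall x, X x -> (S x <-> U x).
Definition closed_in (X S : G -> Prop) : Prop :=
  subset S X /\ exists C, is_closed C /\ forall x, X x -> (S x <-> C x).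

Definition closed_subgroup_in (X K : G -> Prop) : Prop :=
  is_subgroup K /\ closed_in X K.

Definition max_cond_closed : Prop :=
  forall F : (G -> Prop) -> Prop,
    (forall K, F K -> closed_subgroup_in (fun _ => True) K) ->
    (exists K, F K) ->
    exists M, F M /\ forall K, F K -> subset M K -> subset K M.

Definition normalizer (X K : G -> Prop) : G -> Prop :=
  fun x => X x /\ forall k, K k <-> K (mul G (mul G x k) (inv G x)).

(* [L : K] < infinity (for K <= L): finitely many left cosets of K in L *)
Definition fin_index (L K : G -> Prop) : Prop :=
  exists s : list G, forall y, L y -> exists l, In l s /\ L l /\ K (mul G (inv G l) y).

Definition orbital (X K : G -> Prop) : Prop :=
  closed_subgroup_in X K /\ open_in X (normalizer X K).

Definition isolated_orbital (X K : G -> Prop) : Prop :=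
  orbital X K /\
  forall K', orbital X K' -> subset K K' -> ~ subset K' K -> ~ fin_index K' K.

(* i_X(K): the closed subgroup of X generated by all X-orbital closed L with
   K <= L and [L:K] finite, i.e. the intersection of all closed subgroups of X
   containing all such L. *)
Definition isolator (X K : G -> Prop) : G -> Prop :=
  fun x => forall M, closed_subgroup_in X M ->
    (forall L, orbital X L -> subset K L -> fin_index L K -> subset L M) -> M x.

End Defs.

(* Main.v *)
Require Import Defs.
From Stdlib Require Import List Classical FunctionalExtensionality PropExtensionality Lia.
Import ListNotations.

Local Notation "x ** y" := (mul _ x y) (at level 40, left associativity).
Local Notation iv := (inv _).
Local Notation e := (one _).

Lemma mulA' {G : TopGroup} (x y z : G) : (x ** y) ** z = x ** (y ** z).
Proof. now rewrite mulA. Qed.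
Lemma mulKg {G : TopGroup} (x y : G) : iv x ** (x ** y) = y.
Proof. now rewrite mulA, mulVg, mul1g. Qed.
Lemma mulgV {G : TopGroup} (x : G) : x ** iv x = e.
Proof. rewrite <- (mulKg (iv x) (x ** iv x)), (mulKg x (iv x)). apply mulVg. Qed.
Lemma mulg1 {G : TopGroup} (x : G) : x ** e = x.
Proof. rewrite <- (mulVg G x), mulA, mulgV. apply mul1g. Qed.
Lemma invK {G : TopGroup} (x : G) : iv (iv x) = x.
Proof. rewrite <- (mulg1 (iv (iv x))), <- (mulVg G x). apply mulKg. Qed.
Lemma mulKVg {G : TopGroup} (x y : G) : x ** (iv x ** y) = y.
Proof. now rewrite mulA, mulgV, mul1g. Qed.
Lemma invM {G : TopGroup} (x y : G) : iv (x ** y) = iv y ** iv x.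
Proof.
  assert (H : (x ** y) ** (iv y ** iv x) = e).
  { rewrite mulA', mulKVg. apply mulgV. }
  rewrite <- (mulg1 (iv (x ** y))), <- H. apply mulKg.
Qed.
Lemma inv1 {G : TopGroup} : iv (one G) = e.
Proof. rewrite <- (mulg1 (iv e)). apply mulVg. Qed.

Global Hint Rewrite @mulA' @mulKg @mulgV @mulg1 @mul1g @mulVg @invK @mulKVg @invM @inv1 : grp.
Ltac gs := autorewrite with grp in *.

Lemma open_ext {G : TopGroup} (A B : G -> Prop) :
  (forall x, A x <-> B x) -> is_open G A -> is_open G B.
Proof.
  intros H HA. replace B with A; auto.
  apply functional_extensionality; intro x; apply propositional_extensionality; auto.
Qed.

Lemma open_lmul {G : TopGroup} (U : G -> Prop) (a : G) :
  is_open G U -> is_open G (fun x => U (a ** x)).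
Proof.
  intro HU.
  apply open_ext with (A := fun x => exists V, (is_open G V /\ forall v, V v -> U (a ** v)) /\ V x).
  - intro x; split.
    + intros [V [[_ H] Hx]]; auto.
    + intro Hx. destruct (mul_cont G U a x HU Hx) as [U1 [V [_ [HV [Ha [Hxv Hm]]]]]].
      exists V; repeat split; auto.
  - apply open_union. intros V [HV _]; auto.
Qed.

Lemma open_rmul {G : TopGroup} (U : G -> Prop) (a : G) :
  is_open G U -> is_open G (fun x => U (x ** a)).
Proof.
  intro HU.
  apply open_ext with (A := fun x => exists V, (is_open G V /\ forall v, V v -> U (v ** a)) /\ V x).
  - intro x; split.
    + intros [V [[_ H] Hx]]; auto.
    + intro Hx. destruct (mul_cont G U x a HU Hx) as [U1 [V [HU1 [HV [Ha [Hxv Hm]]]]]].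
      exists U1; repeat split; auto.
  - apply open_union. intros V [HV _]; auto.
Qed.

Lemma open_or {G : TopGroup} (A B : G -> Prop) :
  is_open G A -> is_open G B -> is_open G (fun x => A x \/ B x).
Proof.
  intros HA HB.
  apply open_ext with (A := fun x => exists U, (U = A \/ U = B) /\ U x).
  - intro x; split.
    + intros [U [[-> | ->] Hx]]; auto.
    + intros [Hx | Hx]; eauto.
  - apply open_union. intros U [-> | ->]; auto.
Qed.

Lemma open_list_all {G : TopGroup} {T} (P : T -> G -> Prop) (s : list T) :
  (forall t, In t s -> is_open G (P t)) -> is_open G (fun x => forall t, In t s -> P t x).
Proof.
  induction s as [|a s IH]; intro Ho.
  - apply open_ext with (A := fun _ => True). { intros x; split; auto. intros _ t []. }
    apply open_full.
  - apply open_ext with (A := fun x => P a x /\ (forall t, In t s -> P t x)).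
    + intro x; split.
      * intros [H1 H2] t [<- | Ht]; auto.
      * intro H; split; [apply H; left; auto | intros t Ht; apply H; right; auto].
    + apply open_inter; auto. apply Ho; left; auto.
      apply IH. intros; apply Ho; right; auto.
Qed.

Definition subg {G : TopGroup} (K : G -> Prop) := @is_subgroup G K.

Lemma subg_inv_iff {G : TopGroup} (K : G -> Prop) x : subg K -> (K (iv x) <-> K x).
Proof.
  intros [H1 [H2 H3]]; split; intro H; auto.
  rewrite <- (invK x); auto.
Qed.

Lemma open_subgroup_sup {G : TopGroup} (A V : G -> Prop) :
  subg A -> is_open G V -> V e -> (forall x, V x -> A x) -> is_open G A.
Proof.
  intros HA HV Ve HVA.
  apply open_ext with (A := fun x => exists W, (exists a, A a /\ forall y, W y <-> V (iv a ** y)) /\ W x).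
  - intro x; split.
    + intros [W [[a [Ha HW]] Hx]]. apply HW in Hx. apply HVA in Hx.
      destruct HA as [_ [Hm _]]. specialize (Hm _ _ Ha Hx). gs. auto.
    + intro Hx. exists (fun y => V (iv x ** y)). split.
      * exists x; split; auto. intro; tauto.
      * gs. auto.
  - apply open_union. intros W [a [_ HW]].
    apply open_ext with (A := fun y => V (iv a ** y)). { intro y; rewrite HW; tauto. }
    apply open_lmul; auto.
Qed.

Lemma open_subgroup_closed {G : TopGroup} (V : G -> Prop) :
  subg V -> is_open G V -> is_closed G V.
Proof.
  intros HVs HV. unfold is_closed.
  apply open_ext with (A := fun x => exists W, (exists a, ~ V a /\ forall y, W y <-> V (iv a ** y)) /\ W x).
  - intro x; split.
    + intros [W [[a [Ha HW]] Hx]]. apply HW in Hx. intro Hx'. apply Ha.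
      destruct HVs as [_ [Hm Hi]].
      specialize (Hm _ _ Hx' (Hi _ Hx)). gs. auto.
    + intro Hx. exists (fun y => V (iv x ** y)). split.
      * exists x; split; auto. intro; tauto.
      * gs. apply HVs.
  - apply open_union. intros W [a [_ HW]].
    apply open_ext with (A := fun y => V (iv a ** y)). { intro y; rewrite HW; tauto. }
    apply open_lmul; auto.
Qed.

Lemma list_choice {A B} (P : A -> B -> Prop) (s : list A) :
  (forall a, In a s -> exists b, P a b) -> exists s', forall a, In a s -> exists b, In b s' /\ P a b.
Proof.
  induction s as [|a s IH]; intro H.
  - exists []; intros _ [].
  - destruct (H a (or_introl eq_refl)) as [b Hb].
    destruct IH as [s' Hs']. { intros; apply H; right; auto. }
    exists (b :: s'). intros a' [<- | Ha'].
    + exists b; split; [left|]; auto.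
    + destruct (Hs' a' Ha') as [b' [Hb' Hp]]. exists b'; split; [right|]; auto.
Qed.

Lemma fi_refl {G : TopGroup} (K : G -> Prop) : subg K -> fin_index G K K.
Proof.
  intros HK. exists [e]. intros y Hy. exists e. split; [left; auto|]. split.
  - apply HK.
  - gs. auto.
Qed.

Lemma fi_mono {G : TopGroup} (L K K' : G -> Prop) :
  fin_index G L K -> (forall x, K x -> K' x) -> fin_index G L K'.
Proof.
  intros [s Hs] HK. exists s. intros y Hy. destruct (Hs y Hy) as [l [H1 [H2 H3]]]. eauto.
Qed.

Lemma fi_extL {G : TopGroup} (L L' K : G -> Prop) :
  (forall x, L x <-> L' x) -> fin_index G L K -> fin_index G L' K.
Proof.
  intros HL [s Hs]. exists s. intros y Hy. apply HL in Hy. destruct (Hs y Hy) as [l [H1 [H2 H3]]].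
  exists l. rewrite <- HL. auto.
Qed.

Lemma fi_restrict {G : TopGroup} (A B C : G -> Prop) :
  fin_index G A B -> (forall x, C x -> A x) -> subg C -> subg B ->
  fin_index G C (fun x => B x /\ C x).
Proof.
  intros [s Hs] HCA HC HB.
  destruct (list_choice (fun l c => (exists c', C c' /\ B (iv l ** c')) -> C c /\ B (iv l ** c)) s)
    as [s' Hs'].
  { intros l _. destruct (classic (exists c', C c' /\ B (iv l ** c'))) as [[c' Hc'] | Hn].
    - exists c'; auto.
    - exists e; intro H; contradiction. }
  exists s'. intros y Hy. destruct (Hs y (HCA y Hy)) as [l [Hl [HAl HBl]]].
  destruct (Hs' l Hl) as [c [Hc Hcp]].
  destruct Hcp as [HCc HBc]. { exists y; auto. }
  exists c. split; auto. split; auto.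
  destruct HB as [_ [HBm HBi]]. destruct HC as [_ [HCm HCi]].
  split.
  - specialize (HBm _ _ (HBi _ HBc) HBl). gs. auto.
  - apply HCm; auto.
Qed.

Lemma fi_trans {G : TopGroup} (A B C : G -> Prop) :
  subg A -> (forall x, B x -> A x) -> fin_index G A B -> fin_index G B C -> fin_index G A C.
Proof.
  intros HA HBA [sA HsA] [sB HsB].
  exists (flat_map (fun a => map (fun b => a ** b) sB) sA).
  intros y Hy. destruct (HsA y Hy) as [a [Ha [HAa HBa]]].
  destruct (HsB _ HBa) as [b [Hb [HBb HCb]]].
  exists (a ** b). split; [|split].
  - apply in_flat_map. exists a; split; auto. apply in_map; auto.
  - apply HA; auto.
  - gs. auto.
Qed.

Definition conjset {G : TopGroup} (g : G) (A : G -> Prop) : G -> Prop :=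
  fun y => A (iv g ** y ** g).

Lemma fi_conj {G : TopGroup} (g : G) (A B : G -> Prop) :
  fin_index G A B -> fin_index G (conjset g A) (conjset g B).
Proof.
  intros [s Hs]. exists (map (fun l => g ** l ** iv g) s).
  intros y Hy. unfold conjset in *. destruct (Hs _ Hy) as [l [Hl [HAl HBl]]].
  exists (g ** l ** iv g). split; [apply in_map_iff; exists l; split; auto|]. gs. auto.
Qed.

Lemma conjset_subg {G : TopGroup} (g : G) (A : G -> Prop) : subg A -> subg (conjset g A).
Proof.
  intros [H1 [H2 H3]]. unfold conjset. split; [|split].
  - gs. auto.
  - intros x y Hx Hy. specialize (H2 _ _ Hx Hy). gs. auto.
  - intros x Hx. specialize (H3 _ Hx). gs. auto.
Qed.

Lemma subg_inter {G : TopGroup} (A B : G -> Prop) : subg A -> subg B -> subg (fun x => A x /\ B x).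
Proof.
  intros [a1 [a2 a3]] [b1 [b2 b3]]. split; [|split]; try tauto.
  - intros x y [] []; split; auto.
  - intros x []; split; auto.
Qed.

Lemma fi_inter {G : TopGroup} (K A1 A2 : G -> Prop) :
  subg K -> subg A1 -> subg A2 -> (forall x, A1 x -> K x) ->
  fin_index G K A1 -> fin_index G K A2 -> fin_index G K (fun x => A1 x /\ A2 x).
Proof.
  intros HK H1 H2 H1K F1 F2.
  assert (F3 : fin_index G A1 (fun x => A2 x /\ A1 x)) by (eapply fi_restrict; eauto).
  eapply fi_mono. { eapply fi_trans; eauto. } intros x []; auto.
Qed.

Lemma compact_fi {G : TopGroup} (V : G -> Prop) :
  compact G -> subg V -> is_open G V -> fin_index G (fun _ => True) V.
Proof.
  intros Hc HV Ho.
  destruct (Hc (fun W => exists a, forall y, W y <-> V (iv a ** y))) as [s [Hs1 Hs2]].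
  - intros W [a HW]. apply open_ext with (A := fun y => V (iv a ** y)). { intro; rewrite HW; tauto. }
    apply open_lmul; auto.
  - intro x. exists (fun y => V (iv x ** y)). split. { exists x; tauto. } gs. apply HV.
  - destruct (list_choice (fun W a => forall y, W y <-> V (iv a ** y)) s) as [s' Hs'].
    { intros W HW. apply Hs1; auto. }
    exists s'. intros y _. destruct (Hs2 y) as [W [HW HWy]].
    destruct (Hs' W HW) as [a [Ha HaW]]. exists a; split; auto. split; auto. apply HaW; auto.
Qed.

Definition norms {G : TopGroup} (x : G) (K : G -> Prop) := forall k, K k <-> K (x ** k ** iv x).

Lemma norms_subg {G : TopGroup} (K : G -> Prop) : subg (fun x => norms x K).
Proof.
  unfold norms. split; [|split].
  - intro k. gs. tauto.
  - intros x y Hx Hy k. rewrite (Hy k), (Hx (y ** k ** iv y)). gs. tauto.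
  - intros x Hx k. rewrite (Hx (iv x ** k ** iv (iv x))). gs. tauto.
Qed.

Lemma norms_inv {G : TopGroup} (K : G -> Prop) n z : norms n K -> (K (iv n ** z ** n) <-> K z).
Proof. intros Hn. rewrite (Hn (iv n ** z ** n)). gs. tauto. Qed.

Fixpoint prodl {G : TopGroup} (ws : list G) : G :=
  match ws with [] => e | w :: ws => w ** prodl ws end.

Lemma prodl_app {G : TopGroup} (a b : list G) : prodl (a ++ b) = prodl a ** prodl b.
Proof. induction a; simpl; gs; auto. rewrite IHa. gs. auto. Qed.

Lemma prodl_conj {G : TopGroup} (x : G) (b : list G) :
  prodl (map (fun y => x ** y ** iv x) b) = x ** prodl b ** iv x.
Proof. induction b; simpl; gs; auto. rewrite IHb. gs. auto. Qed.

Lemma subg_prodl {G : TopGroup} (J : G -> Prop) ws : subg J -> Forall J ws -> J (prodl ws).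
Proof.
  intros HJ H; induction H; simpl. apply HJ. apply HJ; auto.
Qed.

Lemma not_nodup {A} (l : list A) : ~ NoDup l -> exists a x b c, l = a ++ x :: b ++ x :: c.
Proof.
  induction l as [|y l IH]; intro H.
  - exfalso; apply H; constructor.
  - destruct (classic (In y l)) as [Hy | Hy].
    + destruct (in_split _ _ Hy) as [b [c ->]]. exists [], y, b, c. auto.
    + destruct IH as [a [x [b [c ->]]]].
      { intro Hn; apply H; constructor; auto. }
      exists (y :: a), x, b, c. auto.
Qed.

Lemma rep_list {G : TopGroup} (S K0 : G -> Prop) (C : list G) ws :
  (forall y, S y -> exists c, In c C /\ S c /\ K0 (iv c ** y)) -> Forall S ws ->
  exists wc, Forall2 (fun c y => In c C /\ S c /\ S y /\ K0 (iv c ** y)) wc ws.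
Proof.
  intros Hr H; induction H.
  - exists []; constructor.
  - destruct (Hr x H) as [c Hc]. destruct IHForall as [wc Hwc]. exists (c :: wc); constructor; tauto.
Qed.

Lemma cong_prodl {G : TopGroup} (J K0 : G -> Prop) wc ws :
  subg J -> subg K0 -> (forall d y, J d -> K0 y -> K0 (d ** y ** iv d)) ->
  Forall2 (fun c y => J c /\ J y /\ K0 (iv c ** y)) wc ws ->
  K0 (iv (prodl wc) ** prodl ws).
Proof.
  intros HJ HK Hn H; induction H; simpl.
  - gs. apply HK.
  - destruct H as [Jx [Jy Kxy]].
    assert (Jl : J (prodl l)).
    { clear -H0 HJ. induction H0; simpl. apply HJ. apply HJ; tauto. }
    assert (Jl' : J (iv (prodl l))) by (apply HJ; auto).
    specialize (Hn _ _ Jl' Kxy).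
    pose proof (proj1 (proj2 HK) _ _ Hn IHForall2). gs. auto.
Qed.

Lemma reduce {G : TopGroup} (J K0 S : G -> Prop) (C : list G) :
  subg J -> subg K0 -> (forall d y, J d -> K0 y -> K0 (d ** y ** iv d)) ->
  (forall y, S y -> J y) -> (forall x y, J x -> S y -> S (x ** y ** iv x)) ->
  (forall y, S y -> S (y ** y)) ->
  (forall y, S y -> exists c, In c C /\ S c /\ K0 (iv c ** y)) ->
  forall n ws, length ws <= n -> Forall S ws -> exists ws', Forall (fun c => In c C /\ S c) ws' /\
     length ws' <= length C /\ K0 (iv (prodl ws') ** prodl ws).
Proof.
  intros HJ HK Hn HSJ HSc HSs Hr.
  induction n as [|n IH]; intros ws Hl HS.
  - destruct ws; [|simpl in Hl; lia]. exists []. split; [constructor|]. split; [simpl; lia|].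
    simpl. gs. apply HK.
  - destruct (rep_list S K0 C ws Hr HS) as [wc Hwc].
    assert (Hlen : length wc = length ws) by (eapply Forall2_length; eauto).
    assert (HwcF : Forall (fun c => In c C /\ S c) wc).
    { clear -Hwc. induction Hwc; constructor; tauto. }
    assert (Hcong : K0 (iv (prodl wc) ** prodl ws)).
    { apply (cong_prodl J); auto. eapply Forall2_impl; [|exact Hwc].
      intros c y [_ [Sc [Sy Kc]]]. auto. }
    destruct (classic (NoDup wc)) as [Hnd | Hnd].
    + exists wc. split; auto. split; auto.
      apply NoDup_incl_length; auto. intros c Hc. rewrite Forall_forall in HwcF. apply HwcF; auto.
    + destruct (not_nodup wc Hnd) as [a [x [b [c Heq]]]].
      set (w2 := a ++ map (fun y => x ** y ** iv x) b ++ (x ** x) :: c).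
      assert (Hp : prodl w2 = prodl wc).
      { unfold w2; rewrite Heq. rewrite !prodl_app. simpl. rewrite prodl_app, prodl_conj. simpl. gs. auto. }
      rewrite Heq in HwcF. rewrite !Forall_app in HwcF. simpl in HwcF.
      destruct HwcF as [Fa Fr]. apply Forall_cons_iff in Fr. destruct Fr as [Hx Fr].
      rewrite Forall_app in Fr. destruct Fr as [Fb Fc].
      apply Forall_cons_iff in Fc. destruct Fc as [_ Fc].
      assert (Sx : S x) by tauto.
      assert (HS2 : Forall S w2).
      { unfold w2. rewrite !Forall_app. split; [|split].
        - eapply Forall_impl; [|exact Fa]. tauto.
        - rewrite Forall_map. eapply Forall_impl; [|exact Fb]. intros y [_ Sy]. apply HSc; auto.
        - constructor; auto. eapply Forall_impl; [|exact Fc]. tauto. }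
      assert (Hl2 : length w2 <= n).
      { assert (length wc = length w2 + 1).
        { rewrite Heq. unfold w2. rewrite !length_app. simpl. rewrite length_app, length_map. simpl. lia. }
        lia. }
      destruct (IH w2 Hl2 HS2) as [ws' [F' [L' K']]].
      exists ws'. split; auto. split; auto.
      rewrite Hp in K'. pose proof (proj1 (proj2 HK) _ _ K' Hcong). gs. auto.
Qed.

Fixpoint words {A} (C : list A) (n : nat) : list (list A) :=
  match n with 0 => [[]] | S n => [] :: flat_map (fun c => map (cons c) (words C n)) C end.

Lemma in_words {A} (C : list A) n w :
  length w <= n -> (forall c, In c w -> In c C) -> In w (words C n).
Proof.
  revert w; induction n as [|n IH]; intros w Hl Hc.
  - destruct w; [left; auto | simpl in Hl; lia].
  - destruct w as [|a w]; [left; auto|]. right. apply in_flat_map. exists a. split.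
    + apply Hc; left; auto.
    + apply in_map. apply IH. simpl in Hl; lia. intros c H; apply Hc; right; auto.
Qed.

Definition gen {G : TopGroup} (L0 L : G -> Prop) : G -> Prop :=
  fun y => exists ws, Forall (fun w => L0 w \/ L w) ws /\ prodl ws = y.

Lemma prodl_rev_inv {G : TopGroup} (ws : list G) : prodl (rev (map iv ws)) = iv (prodl ws).
Proof. induction ws; simpl; gs; auto. rewrite prodl_app, IHws. simpl. gs. auto. Qed.

Lemma gen_subg {G : TopGroup} (L0 L : G -> Prop) : subg L0 -> subg L -> subg (gen L0 L).
Proof.
  intros H0 H1. split; [|split].
  - exists []; split; auto.
  - intros x y [a [Ha <-]] [b [Hb <-]]. exists (a ++ b). split.
    + apply Forall_app; auto.
    + apply prodl_app.
  - intros x [a [Ha <-]]. exists (rev (map iv a)). split.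
    + apply Forall_rev. apply Forall_map. eapply Forall_impl; [|exact Ha].
      intros w [Hw | Hw]; [left; apply H0 | right; apply H1]; auto.
    + apply prodl_rev_inv.
Qed.

Lemma gen_l {G : TopGroup} (L0 L : G -> Prop) x : L0 x -> gen L0 L x.
Proof. intro H. exists [x]. split; [constructor; auto|]. simpl; gs; auto. Qed.
Lemma gen_r {G : TopGroup} (L0 L : G -> Prop) x : L x -> gen L0 L x.
Proof. intro H. exists [x]. split; [constructor; auto|]. simpl; gs; auto. Qed.

Lemma gen_min {G : TopGroup} (L0 L M : G -> Prop) :
  subg M -> (forall x, L0 x -> M x) -> (forall x, L x -> M x) -> forall x, gen L0 L x -> M x.
Proof.
  intros HM H0 H1 x [ws [Hw <-]]. apply subg_prodl; auto.
  eapply Forall_impl; [|exact Hw]. intros w [|]; auto.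
Qed.

Lemma gen_norm1 {G : TopGroup} (L0 L : G -> Prop) x y :
  norms x L0 -> norms x L -> gen L0 L y -> gen L0 L (x ** y ** iv x).
Proof.
  intros N0 N1 [ws [Hw <-]]. exists (map (fun w => x ** w ** iv x) ws). split.
  - apply Forall_map. eapply Forall_impl; [|exact Hw].
    intros w [Hw' | Hw']; cbv beta; [left; apply (proj1 (N0 w)) | right; apply (proj1 (N1 w))]; auto.
  - apply prodl_conj.
Qed.

Lemma gen_norm {G : TopGroup} (L0 L : G -> Prop) x :
  norms x L0 -> norms x L -> norms x (gen L0 L).
Proof.
  intros N0 N1 k. split; [apply gen_norm1; auto|].
  intro H. assert (Ni0 : norms (iv x) L0) by (apply norms_subg; auto).
  assert (Ni1 : norms (iv x) L) by (apply norms_subg; auto).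
  pose proof (gen_norm1 L0 L _ _ Ni0 Ni1 H). gs. auto.
Qed.

Lemma comm1 {G : TopGroup} (K : G -> Prop) g h : subg K ->
  fin_index G K (fun y => K y /\ conjset g K y) -> fin_index G K (fun y => K y /\ conjset h K y) ->
  fin_index G K (fun y => K y /\ conjset (g ** h) K y).
Proof.
  intros HK F1 F2.
  pose proof (fi_conj g _ _ F2) as F3.
  assert (HA : subg (fun y => K y /\ conjset g K y)) by (apply subg_inter; auto; apply conjset_subg; auto).
  assert (F4 := fi_restrict _ _ (fun y => K y /\ conjset g K y) F3 (fun x H => proj2 H) HA
     (conjset_subg _ _ (subg_inter _ _ HK (conjset_subg h _ HK)))).
  assert (F5 := fi_trans _ _ _ HK (fun x H => proj1 H) F1 F4).
  eapply fi_mono; [exact F5|]. unfold conjset. intros x [[H1 H2] [H3 H4]]. split; auto. gs. auto.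
Qed.

Lemma comm_gen {G : TopGroup} (K L0 : G -> Prop) w : subg K -> subg L0 -> (forall x, K x -> L0 x) ->
  fin_index G L0 K -> L0 w -> fin_index G K (fun y => K y /\ conjset w K y).
Proof.
  intros HK H0 HKL F Hw.
  pose proof (fi_conj w _ _ F) as F1.
  apply fi_extL with (L' := L0) in F1.
  - pose proof (fi_restrict _ _ K F1 HKL HK (conjset_subg _ _ HK)) as F2.
    eapply fi_mono; [exact F2|]. intros x []; auto.
  - intro x. unfold conjset. split; intro H.
    + assert (H' := proj1 (proj2 H0) _ _ (proj1 (proj2 H0) _ _ Hw H) (proj2 (proj2 H0) _ Hw)). gs. auto.
    + apply H0; [apply H0|]; auto. apply H0; auto.
Qed.

Lemma comm_all {G : TopGroup} (K L0 L : G -> Prop) : subg K -> subg L0 -> subg L ->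
  (forall x, K x -> L0 x) -> (forall x, K x -> L x) -> fin_index G L0 K -> fin_index G L K ->
  forall ws, Forall (fun w => L0 w \/ L w) ws ->
  fin_index G K (fun y => K y /\ conjset (prodl ws) K y) /\
  fin_index G K (fun y => K y /\ conjset (iv (prodl ws)) K y).
Proof.
  intros HK H0 H1 HK0 HK1 F0 F1 ws Hws.
  assert (Hg : forall w, L0 w \/ L w -> fin_index G K (fun y => K y /\ conjset w K y)).
  { intros w [Hw | Hw]; [eapply comm_gen with (L0 := L0) | eapply comm_gen with (L0 := L)]; eauto. }
  induction Hws as [|w ws Hw Hws IH]; simpl.
  - split; eapply fi_mono; try apply (fi_refl K HK); intros x Hx; unfold conjset; gs; auto.
  - destruct IH as [IH1 IH2]. split.
    + apply comm1; auto.
    + assert (Hw' : L0 (iv w) \/ L (iv w)) by (destruct Hw; [left; apply H0 | right; apply H1]; auto).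
      pose proof (comm1 K _ _ HK IH2 (Hg _ Hw')) as F.
      eapply fi_mono; [exact F|]. unfold conjset. intros x [Hx1 Hx2]; split; auto. gs. auto.
Qed.

Lemma crux {G : TopGroup} (K L0 L : G -> Prop) :
  subg K -> subg L0 -> subg L -> (forall x, K x -> L0 x) -> (forall x, K x -> L x) ->
  fin_index G L0 K -> fin_index G L K ->
  fin_index G (fun _ => True) (fun x => norms x K) ->
  fin_index G (fun _ => True) (fun x => norms x L0) ->
  fin_index G (fun _ => True) (fun x => norms x L) ->
  fin_index G (gen L0 L) K.
Proof.
  intros HK H0 H1 HK0 HK1 F0 F1 NK N0 N1.
  set (J := gen L0 L).
  assert (HJ : subg J) by (apply gen_subg; auto).
  assert (JL0 : forall x, L0 x -> J x) by (intros; apply gen_l; auto).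
  assert (JL1 : forall x, L x -> J x) by (intros; apply gen_r; auto).
  assert (Jinv : forall x, J x -> J (iv x)) by apply HJ.
  assert (Jmul : forall x y, J x -> J y -> J (x ** y)) by apply HJ.
  assert (Je : J e) by apply HJ.
  assert (Jcomm : forall g, J g -> fin_index G K (fun y => K y /\ conjset g K y)).
  { intros g [ws [Hws <-]]. apply (comm_all K L0 L); auto. }
  destruct (fi_restrict _ _ J NK (fun _ _ => I) HJ (norms_subg K)) as [R HR].
  set (K0 := fun y => K y /\ forall r, In r (e :: R) -> J r -> K (iv r ** y ** r)).
  assert (HK0s : subg K0).
  { split; [|split].
    - split; [apply HK|]. intros r _ _. gs. apply HK.
    - intros x y [Kx Hx] [Ky Hy]. split; [apply HK; auto|]. intros r Hr Jr.
      pose proof (proj1 (proj2 HK) _ _ (Hx r Hr Jr) (Hy r Hr Jr)). gs. auto.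
    - intros x [Kx Hx]. split; [apply HK; auto|]. intros r Hr Jr.
      pose proof (proj2 (proj2 HK) _ (Hx r Hr Jr)). gs. auto. }
  assert (HK0K : forall x, K0 x -> K x) by (intros x []; auto).
  assert (Hnorm : forall d y, J d -> K0 y -> K0 (d ** y ** iv d)).
  { intros d y Jd [Ky Hy].
    assert (Hall : forall r, J r -> K (iv r ** (d ** y ** iv d) ** r)).
    { intros r Jr. destruct (HR (iv d ** r)) as [r' [Hr' [Jr' [Nr' _]]]]; [auto|].
      pose proof (Hy r' (or_intror Hr') Jr') as Hk.
      pose proof (proj2 (norms_inv K _ _ Nr') Hk) as Hk2. gs. auto. }
    split.
    - pose proof (Hall e Je). gs. auto.
    - intros r _ Jr. apply Hall; auto. }
  assert (FK0 : fin_index G K K0).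
  { assert (Hl : forall l, fin_index G K (fun y => K y /\ forall r, In r l -> J r -> K (iv r ** y ** r))
              /\ subg (fun y => K y /\ forall r, In r l -> J r -> K (iv r ** y ** r))).
    { induction l as [|r l [IH1 IH2]].
      - split.
        + eapply fi_mono; [apply (fi_refl K HK)|]. intros x Hx; split; auto. intros r [].
        + split; [|split].
          * split; [apply HK|]. intros r [].
          * intros x y [] []; split; [apply HK; auto|]. intros r [].
          * intros x []; split; [apply HK; auto|]. intros r [].
      - assert (HS : subg (fun y => K y /\ forall r0, In r0 (r :: l) -> J r0 -> K (iv r0 ** y ** r0))).
        { split; [|split].
          - split; [apply HK|]. intros r0 _ _. gs. apply HK.
          - intros x y [Kx Hx] [Ky Hy]. split; [apply HK; auto|]. intros r0 Hr Jr.
            pose proof (proj1 (proj2 HK) _ _ (Hx r0 Hr Jr) (Hy r0 Hr Jr)). gs. auto.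
          - intros x [Kx Hx]. split; [apply HK; auto|]. intros r0 Hr Jr.
            pose proof (proj2 (proj2 HK) _ (Hx r0 Hr Jr)). gs. auto. }
        split; auto.
        destruct (classic (J r)) as [Jr | Jr].
        + pose proof (fi_inter K _ _ HK IH2 (subg_inter _ _ HK (conjset_subg r _ HK))
             (fun x H => proj1 H) IH1 (Jcomm r Jr)) as F.
          eapply fi_mono; [exact F|]. intros x [[Kx Hx] [_ Hc]]. split; auto.
          intros r0 [<- | Hr0] Jr0; auto.
        + eapply fi_mono; [exact IH1|]. intros x [Kx Hx]. split; auto.
          intros r0 [<- | Hr0] Jr0; [contradiction | auto]. }
    apply Hl. }
  assert (HK0J : forall x, K0 x -> J x) by (intros x Hx; apply HK0K in Hx; apply JL0, HK0; auto).
  assert (Hconj : forall d y, J d -> (K0 (iv d ** y ** d) <-> K0 y)).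
  { intros d y Jd; split; intro H.
    - pose proof (Hnorm d _ Jd H) as H'. gs. auto.
    - pose proof (Hnorm (iv d) y (Jinv d Jd) H) as H'. gs. auto. }
  assert (FM : forall M, subg M -> (forall x, K x -> M x) -> fin_index G M K ->
            forall r, J r -> fin_index G (conjset r M) K0).
  { intros M HM HKM FMK r Jr.
    pose proof (fi_conj r _ _ FMK) as FA.
    pose proof (fi_conj r _ _ FK0) as FB.
    assert (FB' : fin_index G (conjset r K) K0).
    { eapply fi_mono; [exact FB|]. intros x Hx. unfold conjset in Hx. apply Hconj in Hx; auto. }
    apply (fi_trans _ (conjset r K)); auto.
    - apply conjset_subg; auto.
    - unfold conjset; intros x Hx; auto. }
  set (S := fun y => exists d, J d /\ (L0 (iv d ** y ** d) \/ L (iv d ** y ** d))).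
  assert (HSJ : forall y, S y -> J y).
  { intros y [d [Jd Hy]].
    assert (Jz : J (iv d ** y ** d)) by (destruct Hy; auto).
    pose proof (Jmul _ _ (Jmul _ _ Jd Jz) (Jinv _ Jd)) as Hj. gs. auto. }
  assert (HSc : forall x y, J x -> S y -> S (x ** y ** iv x)).
  { intros x y Jx [d [Jd Hy]]. exists (x ** d). split; auto. gs. auto. }
  assert (HSs : forall y, S y -> S (y ** y)).
  { intros y [d [Jd [Hy | Hy]]]; exists d; split; auto.
    - left. pose proof (proj1 (proj2 H0) _ _ Hy Hy). gs. auto.
    - right. pose proof (proj1 (proj2 H1) _ _ Hy Hy). gs. auto. }
  destruct (fi_restrict _ _ J N0 (fun _ _ => I) HJ (norms_subg L0)) as [R0 HR0].
  destruct (fi_restrict _ _ J N1 (fun _ _ => I) HJ (norms_subg L)) as [R1 HR1].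
  destruct (list_choice (fun r s => J r -> forall y, conjset r L0 y ->
      exists c, In c s /\ conjset r L0 c /\ K0 (iv c ** y)) R0) as [S0 HS0].
  { intros r _. destruct (classic (J r)) as [Jr | Jr].
    - destruct (FM L0 H0 HK0 F0 r Jr) as [s Hs]. exists s. intros _ y Hy.
      destruct (Hs y Hy) as [c [? [? ?]]]; eauto.
    - exists []. intro; contradiction. }
  destruct (list_choice (fun r s => J r -> forall y, conjset r L y ->
      exists c, In c s /\ conjset r L c /\ K0 (iv c ** y)) R1) as [S1 HS1].
  { intros r _. destruct (classic (J r)) as [Jr | Jr].
    - destruct (FM L H1 HK1 F1 r Jr) as [s Hs]. exists s. intros _ y Hy.
      destruct (Hs y Hy) as [c [? [? ?]]]; eauto.
    - exists []. intro; contradiction. }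
  set (C := concat S0 ++ concat S1).
  assert (Hr : forall y, S y -> exists c, In c C /\ S c /\ K0 (iv c ** y)).
  { intros y [d [Jd [Hy | Hy]]].
    - destruct (HR0 d Jd) as [r [Hr [Jr [Nr _]]]].
      assert (Hc : conjset r L0 y).
      { unfold conjset. apply (norms_inv L0 _ (iv r ** y ** r) Nr). gs. auto. }
      destruct (HS0 r Hr) as [s [Hs Hps]]. destruct (Hps Jr y Hc) as [c [Hcs [Hcc Hk]]].
      exists c. split; [apply in_app_iff; left; apply in_concat; eauto|]. split; auto.
      exists r; split; auto.
    - destruct (HR1 d Jd) as [r [Hr [Jr [Nr _]]]].
      assert (Hc : conjset r L y).
      { unfold conjset. apply (norms_inv L _ (iv r ** y ** r) Nr). gs. auto. }
      destruct (HS1 r Hr) as [s [Hs Hps]]. destruct (Hps Jr y Hc) as [c [Hcs [Hcc Hk]]].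
      exists c. split; [apply in_app_iff; right; apply in_concat; eauto|]. split; auto.
      exists r; split; auto. }
  exists (map prodl (words C (length C))).
  intros y Hy. destruct Hy as [ws [Hws Hy]].
  assert (HwsS : Forall S ws).
  { eapply Forall_impl; [|exact Hws]. intros w Hw. exists e. split; auto. gs. auto. }
  destruct (reduce J K0 S C HJ HK0s Hnorm HSJ HSc HSs Hr (length ws) ws (le_n _) HwsS)
    as [ws' [F' [L' K']]].
  exists (prodl ws'). split; [|split].
  - apply in_map. apply in_words; auto. intros c Hc. rewrite Forall_forall in F'. apply F'; auto.
  - apply subg_prodl; auto. eapply Forall_impl; [|exact F']. intros c [_ Sc]; apply HSJ; auto.
  - apply HK0K. rewrite <- Hy. auto.
Qed.

Lemma closed_in_closed {G : TopGroup} (X K : G -> Prop) :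
  subg X -> is_open G X -> closed_in G X K -> is_closed G K.
Proof.
  intros HX HXo [HKX [C [HC HKC]]]. unfold is_closed.
  apply open_ext with (A := fun x => ~ X x \/ ~ C x).
  - intro x; split.
    + intros [H | H] HK; [apply H, HKX; auto | apply H, HKC; auto; apply HKX; auto].
    + intro H. destruct (classic (X x)) as [Hx | Hx]; [right | left]; auto.
      intro Hc; apply H; apply HKC; auto.
  - apply open_or; auto. apply open_subgroup_closed; auto.
Qed.

Lemma orbital_elim {G : TopGroup} (X K : G -> Prop) :
  subg X -> is_open G X -> orbital G X K ->
  subg K /\ (forall x, K x -> X x) /\ is_closed G K /\ is_open G (normalizer G X K).
Proof.
  intros HX HXo [[HK HKc] [HNX [U [HU HNU]]]].
  refine (conj HK (conj (proj1 HKc) (conj (closed_in_closed X K HX HXo HKc) _))).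
  apply open_ext with (A := fun x => X x /\ U x).
  - intro x; split.
    + intros [Hx Hu]. apply (proj2 (HNU x Hx)); auto.
    + intro H; split; [apply HNX; auto | apply HNU; auto; apply HNX; auto].
  - apply open_inter; auto.
Qed.

Lemma normalizer_subg {G : TopGroup} (X K : G -> Prop) : subg X -> subg (normalizer G X K).
Proof. intro HX. apply (subg_inter X (fun x => norms x K) HX (norms_subg K)). Qed.

Lemma orbital_intro {G : TopGroup} (X K V : G -> Prop) :
  subg X -> is_open G X -> subg K -> (forall x, K x -> X x) -> is_closed G K ->
  is_open G V -> V e -> (forall x, V x -> normalizer G X K x) -> orbital G X K.
Proof.
  intros HX HXo HK HKX HKc HV Ve HVN. split.
  - split; auto. split; [exact HKX|]. exists K; split; auto. tauto.
  - split; [intros x []; auto|]. exists (normalizer G X K). split; [|tauto].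
    eapply open_subgroup_sup; eauto. apply normalizer_subg; auto.
Qed.

Lemma orbital_norms_fi {G : TopGroup} (X K : G -> Prop) :
  compact G -> subg X -> is_open G X -> orbital G X K ->
  fin_index G (fun _ => True) (fun x => norms x K).
Proof.
  intros Hc HX HXo Ho. destruct (orbital_elim X K HX HXo Ho) as [HK [HKX [HKc HN]]].
  apply compact_fi; auto. apply norms_subg.
  apply (open_subgroup_sup _ (normalizer G X K)); auto.
  - apply norms_subg.
  - split; [apply HX|]. intro k. unfold norms. gs. tauto.
  - intros x []; auto.
Qed.

Lemma closed_fi {G : TopGroup} (J K : G -> Prop) :
  subg J -> (forall x, K x -> J x) -> is_closed G K -> fin_index G J K -> is_closed G J.
Proof.
  intros HJ HKJ HKc [s Hs]. unfold is_closed.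
  apply open_ext with (A := fun y => forall l, In l s -> ~ (J l /\ K (iv l ** y))).
  - intro y; split.
    + intros H Hy. destruct (Hs y Hy) as [l [Hl [Jl Kl]]]. eapply H; eauto.
    + intros H l Hl [Jl Kl]. apply H.
      pose proof (proj1 (proj2 HJ) _ _ Jl (HKJ _ Kl)). gs. auto.
  - apply open_list_all. intros l _. destruct (classic (J l)) as [Jl | Jl].
    + apply open_ext with (A := fun y => ~ K (iv l ** y)). { intro; tauto. }
      apply (open_lmul (fun z => ~ K z) (iv l)). exact HKc.
    + apply open_ext with (A := fun _ => True). { intro; tauto. } apply open_full.
Qed.

Definition Fam {G : TopGroup} (X K L : G -> Prop) :=
  orbital G X L /\ subset G K L /\ fin_index G L K.

Lemma key {G : TopGroup} (X K : G -> Prop) :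
  compact G -> max_cond_closed G -> subg X -> is_open G X -> orbital G X K ->
  Fam X K (isolator G X K) /\ forall L, Fam X K L -> subset G L (isolator G X K).
Proof.
  intros Hc Hm HX HXo HoK.
  destruct (orbital_elim X K HX HXo HoK) as [HK [HKX [HKc HNK]]].
  destruct (Hm (Fam X K)) as [M [FM Mmax]].
  - intros L [HoL _]. destruct (orbital_elim X L HX HXo HoL) as [HL [_ [HLc _]]].
    split; auto. split; [intros x _; exact I|]. exists L; split; auto; tauto.
  - exists K. split; auto. split; [intros x; auto|]. apply fi_refl; auto.
  - assert (Hall : forall L, Fam X K L -> subset G L M).
    { intros L FL. destruct FM as [HoM [HKM FMK]]. destruct FL as [HoL [HKL FLK]].
      destruct (orbital_elim X M HX HXo HoM) as [HMs [HMX [HMc HNM]]].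
      destruct (orbital_elim X L HX HXo HoL) as [HLs [HLX [HLc HNL]]].
      set (J := gen M L).
      assert (HJ : subg J) by (apply gen_subg; auto).
      assert (FJ : fin_index G J K).
      { apply crux; auto; try (eapply orbital_norms_fi; eauto; fail). all: eapply (orbital_norms_fi X); eauto. }
      assert (HJF : Fam X K J).
      { split; [|split]; auto.
        - apply (orbital_intro X J (fun x => normalizer G X M x /\ normalizer G X L x)); auto.
          + apply gen_min; auto.
          + apply (closed_fi J K); auto. intros x Hx; apply gen_l; auto.
          + apply open_inter; auto.
          + split; split; try apply HX; intro k; unfold norms; gs; tauto.
          + intros x [[Xx Nx] [_ Nx']]. split; auto. apply gen_norm; auto.
        - intros x Hx; apply gen_l; auto. }
      assert (HMJ : subset G M J) by (intros x Hx; apply gen_l; auto).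
      intros x Hx. apply (Mmax J HJF HMJ). apply gen_r; auto. }
    assert (Heq : isolator G X K = M).
    { apply functional_extensionality; intro x; apply propositional_extensionality; split.
      - intro H. apply H.
        + destruct FM as [HoM _]. destruct HoM as [HM _]. exact HM.
        + intros L HoL HKL FLK. apply Hall. split; auto.
      - intros Hx M' _ H. destruct FM as [HoM [HKM FMK]]. apply (H M HoM HKM FMK). auto. }
    rewrite Heq. split; auto.
Qed.

Lemma iso_isolated {G : TopGroup} (X K : G -> Prop) :
  compact G -> max_cond_closed G -> subg X -> is_open G X -> orbital G X K ->
  isolated_orbital G X (isolator G X K).
Proof.
  intros Hc Hm HX HXo HoK.
  destruct (key X K Hc Hm HX HXo HoK) as [[HoI [HKI FIK]] Hmax].
  split; auto. intros K' HoK' HIK' Hn Hf. apply Hn. apply Hmax. split; auto. split.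
  - intros x Hx; apply HIK', HKI; auto.
  - destruct (orbital_elim X K' HX HXo HoK') as [HK' _].
    apply (fi_trans K' (isolator G X K) K); auto.
Qed.

Lemma iso_iso {G : TopGroup} (X K : G -> Prop) :
  compact G -> max_cond_closed G -> subg X -> is_open G X -> isolated_orbital G X K ->
  isolator G X K = K.
Proof.
  intros Hc Hm HX HXo [HoK Hiso].
  destruct (key X K Hc Hm HX HXo HoK) as [[HoI [HKI FIK]] Hmax].
  assert (HIK : subset G (isolator G X K) K).
  { destruct (classic (subset G (isolator G X K) K)) as [H | H]; auto.
    exfalso. eapply Hiso; eauto. }
  apply functional_extensionality; intro x; apply propositional_extensionality; split.
  - apply HIK.
  - apply HKI.
Qed.

Lemma iso_mono {G : TopGroup} (X K L : G -> Prop) :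
  compact G -> max_cond_closed G -> subg X -> is_open G X -> orbital G X K -> Fam X K L ->
  isolator G X L = isolator G X K.
Proof.
  intros Hc Hm HX HXo HoK FL.
  destruct FL as [HoL [HKL FLK]].
  destruct (key X K Hc Hm HX HXo HoK) as [[HoIK [HKIK FIK]] HmaxK].
  destruct (key X L Hc Hm HX HXo HoL) as [[HoIL [HLIL FIL]] HmaxL].
  assert (A : subset G (isolator G X K) (isolator G X L)).
  { apply HmaxL. split; auto. split.
    - apply HmaxK. split; auto.
    - eapply fi_mono; eauto. }
  assert (B : subset G (isolator G X L) (isolator G X K)).
  { apply HmaxK. split; auto. split.
    - intros x Hx; apply HLIL, HKL; auto.
    - destruct (orbital_elim X _ HX HXo HoIL) as [HIL _].
      apply (fi_trans _ L); auto. }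
  apply functional_extensionality; intro x; apply propositional_extensionality; split; auto.
Qed.

Lemma closed_inter {G : TopGroup} (A B : G -> Prop) :
  is_closed G A -> is_closed G B -> is_closed G (fun x => A x /\ B x).
Proof.
  intros HA HB. unfold is_closed.
  apply open_ext with (A := fun x => ~ A x \/ ~ B x). { intro x; tauto. }
  apply open_or; auto.
Qed.

Lemma orb_restrict {G : TopGroup} (H G' : G -> Prop) :
  is_normal G H -> is_open G H -> orbital G (fun _ => True) G' -> orbital G H (setI G G' H).
Proof.
  intros [HH Hn] HHo HoG.
  assert (HT : subg (fun _ : G => True)) by (split; [|split]; auto).
  destruct (orbital_elim _ G' HT (open_full G) HoG) as [HG' [_ [HG'c HN]]].
  unfold setI.
  apply (orbital_intro H _ (fun x => normalizer G (fun _ => True) G' x /\ H x)); auto.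
  - apply subg_inter; auto.
  - intros x []; auto.
  - apply closed_inter; auto. apply open_subgroup_closed; auto.
  - apply open_inter; auto.
  - split; [split; [auto|] | apply HH]. intro k; unfold norms. gs. tauto.
  - intros x [[_ Nx] Hx]. split; auto. intro k. rewrite (Nx k). split.
    + intros [H1 H2]; split; auto.
    + intros [H1 H2]; split; auto. pose proof (Hn (iv x) _ H2). gs. auto.
Qed.

Lemma orb_extend {G : TopGroup} (H K : G -> Prop) :
  subg H -> is_open G H -> orbital G H K -> orbital G (fun _ => True) K.
Proof.
  intros HH HHo HoK.
  assert (HT : subg (fun _ : G => True)) by (split; [|split]; auto).
  destruct (orbital_elim H K HH HHo HoK) as [HK [HKH [HKc HN]]].
  apply (orbital_intro _ K (normalizer G H K)); auto.
  - apply open_full.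
  - split; [apply HH|]. intro k; unfold norms; gs; tauto.
  - intros x [_ Nx]; split; auto.
Qed.

Theorem lemma1p12 (G : TopGroup) (H : G -> Prop) :
  profinite G -> max_cond_closed G ->
  @is_normal G H -> is_open G H ->
  let GG := (fun _ : G => True) in
  (forall G', @isolated_orbital G GG G' ->
     @orbital G H (@setI G G' H) /\ @isolated_orbital G H (@isolator G H (@setI G G' H))) /\
  (forall H', @isolated_orbital G H H' ->
     @orbital G GG H' /\ @isolated_orbital G GG (@isolator G GG H')) /\
  (forall G', @isolated_orbital G GG G' ->
     @seteq G (@isolator G GG (@isolator G H (@setI G G' H))) G') /\
  (forall H', @isolated_orbital G H H' ->
     @seteq G (@isolator G H (@setI G (@isolator G GG H') H)) H').
Proof.
  intros [Hc _] Hm Hn HHo GG.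
  assert (HT : subg GG) by (split; [|split]; unfold GG; auto).
  assert (HTo : is_open G GG) by apply open_full.
  assert (HH : subg H) by apply Hn.
  split; [|split; [|split]].
  - intros G' [HoG' _].
    assert (Ho := orb_restrict H G' Hn HHo HoG').
    split; auto. apply iso_isolated; auto.
  - intros H' [HoH' _].
    assert (Ho := orb_extend H H' HH HHo HoH').
    split; auto. apply iso_isolated; auto.
  - intros G' HiG'. pose proof HiG' as [HoG' _].
    set (K1 := setI G G' H).
    assert (HoK1 : orbital G H K1) by (apply orb_restrict; auto).
    assert (HoK1G : orbital G GG K1) by (eapply orb_extend; eauto).
    destruct (key H K1 Hc Hm HH HHo HoK1) as [[HoI1 [HKI1 FI1]] _].
    assert (E1 : isolator G GG (isolator G H K1) = isolator G GG K1).
    { apply iso_mono; auto. split; [|split]; auto. eapply orb_extend; eauto. }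
    destruct (orbital_elim _ G' HT HTo HoG') as [HG' _].
    assert (E2 : isolator G GG G' = isolator G GG K1).
    { apply iso_mono; auto. split; [|split]; auto.
      - intros x []; auto.
      - pose proof (fi_restrict _ _ G' (compact_fi H Hc HH HHo) (fun _ _ => I) HG' HH) as F.
        eapply fi_mono; [exact F|]. intros x []; split; auto. }
    assert (E3 : isolator G GG G' = G') by (apply iso_iso; auto).
    fold K1. rewrite E1, <- E2, E3. intro x; tauto.
  - intros H' HiH'. pose proof HiH' as [HoH' _].
    assert (HoH'G : orbital G GG H') by (eapply orb_extend; eauto).
    destruct (key GG H' Hc Hm HT HTo HoH'G) as [[HoI2 [HKI2 FI2]] _].
    destruct (orbital_elim _ _ HH HHo HoH') as [HH' [HH'H _]].
    destruct (orbital_elim _ _ HT HTo HoI2) as [HI2 _].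
    set (K2 := setI G (isolator G GG H') H).
    assert (HoK2 : orbital G H K2) by (apply orb_restrict; auto).
    assert (E1 : isolator G H K2 = isolator G H H').
    { apply iso_mono; auto. split; [|split]; auto.
      - intros x Hx; split; auto.
      - pose proof (fi_restrict _ _ K2 FI2 (fun x Hx => proj1 Hx) (subg_inter _ _ HI2 HH) HH') as F.
        eapply fi_mono; [exact F|]. intros x []; auto. }
    assert (E2 : isolator G H H' = H') by (apply iso_iso; auto).
    fold K2. rewrite E1, E2. intro x; tauto.
Qed.
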